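(* Let $p\neq q$ be primes, $G_1$ a finite abelian group of order $p^e$ and $G_2$ a finite abelian group of order $q^f$. Let $R_i=\mathbf{Z}[G_i]$, $S_i$ the integral closure of $R_i$ in $\mathbf{Q}[G_i]$, and $I_i$ the conductor of $S_i$ into $R_i$. Then the conductor of $S_1\otimes S_2$ into $R_1\otimes R_2\cong\mathbf{Z}[G_1\times G_2]$ is $I_1\otimes I_2$.
   Context: For a commutative ring $S$ with subring $R$, the conductor of $S$ into $R$ is $\{s\in S: sS\subseteq R\}$, the largest ideal of $S$ contained in $R$. Tensor products are over $\mathbf{Z}$; all groups involved are free abelian, so $I_1\otimes I_2\subseteq R_1\otimes R_2\subseteq S_1\otimes S_2$. *)

(* Defs.v *)
From HB Require Import structures.
From mathcomp Require Import all_boot all_order all_algebra all_fingroup.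
Set Implicit Arguments. Unset Strict Implicit. Unset Printing Implicit Defensive.
Import Order.TTheory GRing.Theory Num.Theory.
Local Open Scope ring_scope.

(* The rational group algebra Q[G] of a finite group gT (the whole type),
   represented as functions gT -> rat, with convolution product. *)
Definition QG (gT : finGroupType) := {ffun gT -> rat}.

Definition gmul (gT : finGroupType) (a b : QG gT) : QG gT :=
  [ffun g => \sum_(h : gT) a h * b (h^-1 * g)%g].

Definition gone (gT : finGroupType) : QG gT := [ffun g => (g == 1%g)%:R].

Definition gpow (gT : finGroupType) (a : QG gT) (n : nat) : QG gT :=
  iter n (gmul a) (gone gT).

Definition ZG (gT : finGroupType) (a : QG gT) : Prop :=
  forall g, a g \is a Num.int.

Definition integral_over (gT : finGroupType) (R : QG gT -> Prop) (s : QG gT) : Prop :=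
  exists n (c : 'I_n -> QG gT), (forall i, R (c i)) /\
    gpow s n + \sum_(i < n) gmul (c i) (gpow s i) = 0.

Definition intclos (gT : finGroupType) (s : QG gT) : Prop :=
  integral_over (@ZG gT) s.

Definition conductor (gT : finGroupType) (S R : QG gT -> Prop) (s : QG gT) : Prop :=
  S s /\ forall t, S t -> R (gmul s t).

Definition condG (gT : finGroupType) : QG gT -> Prop :=
  conductor (@intclos gT) (@ZG gT).

Definition tens (gT1 gT2 : finGroupType) (a : QG gT1) (b : QG gT2) : QG (gT1 * gT2)%type :=
  [ffun g => a g.1 * b g.2].

(* A (x) B, the image in Q[G1 x G2] of the tensor product of the subgroups A, B:
   all Z-linear combinations of pure tensors a (x) b with a in A, b in B. *)
Definition tensor_span (gT1 gT2 : finGroupType) (A : QG gT1 -> Prop) (B : QG gT2 -> Prop)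
  (x : QG (gT1 * gT2)%type) : Prop :=
  exists n (c : 'I_n -> int) (a : 'I_n -> QG gT1) (b : 'I_n -> QG gT2),
    (forall i, A (a i) /\ B (b i)) /\ x = \sum_(i < n) (tens (a i) (b i)) *~ c i.

(* Main.v *)
Require Import Defs.
From HB Require Import structures.
From mathcomp Require Import all_boot all_order all_algebra all_fingroup all_field all_character.
From Stdlib Require Import Classical.
Set Implicit Arguments. Unset Strict Implicit. Unset Printing Implicit Defensive.
Import Order.TTheory GRing.Theory Num.Theory.
Local Open Scope ring_scope.

Section Basic.
Variable gT : finGroupType.

Lemma gmulE (a b : QG gT) g : gmul a b g = \sum_(h : gT) a h * b (h^-1 * g)%g.
Proof. by rewrite /gmul ffunE. Qed.

Lemma goneE g : gone gT g = (g == 1%g)%:R.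
Proof. by rewrite /gone ffunE. Qed.

Lemma gmul1r (a : QG gT) : gmul a (gone gT) = a.
Proof.
apply/ffunP=> g; rewrite gmulE (bigD1 g) //= goneE mulVg eqxx mulr1 big1 ?addr0 //.
move=> h hg; rewrite goneE; case: eqP => [/eqP|]; last by rewrite mulr0.
by rewrite -(inj_eq (mulgI h)) mulKVg mulg1 eq_sym (negPf hg).
Qed.

Lemma ZG_intclos (a : QG gT) : ZG a -> intclos a.
Proof.
move=> Za; exists 1%N, (fun _ => - a); split.
  by move=> i g; rewrite ffunE rpredN.
by rewrite big_ord1 /gpow /= !gmul1r subrr.
Qed.

Lemma ZG_gone : ZG (gone gT).
Proof. by move=> g; rewrite goneE; case: eqP. Qed.

End Basic.

Section Char.
Variable gT : finGroupType.
Hypothesis hab : abelian [set: gT].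
Local Notation G := [set: gT].

Definition chiq (i : Iirr G) (a : QG gT) : algC := \sum_h ratr (a h) * 'chi_i h.

Lemma chi_lin i : 'chi[G]_i \is a linear_char.
Proof. exact: (char_abelianP _ hab). Qed.

Lemma chiqM i a b : chiq i (gmul a b) = chiq i a * chiq i b.
Proof.
rewrite /chiq big_distrl /=.
under eq_bigr do rewrite gmulE rmorph_sum /= big_distrl.
rewrite exchange_big /=; apply: eq_bigr => h _.
rewrite big_distrr /= (reindex_inj (mulgI h)) /=; apply: eq_bigr => k _.
rewrite mulKg rmorphM /= lin_charM ?inE ?chi_lin //.
by rewrite mulrACA.
Qed.

Lemma chiq1 i : chiq i (gone gT) = 1.
Proof.
rewrite /chiq (bigD1 1%g) //= goneE eqxx rmorph1 mul1r lin_char1 ?chi_lin //.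
rewrite big1 ?addr0 // => h /negPf; rewrite goneE => ->; by rewrite rmorph0 mul0r.
Qed.

Lemma chiqD i a b : chiq i (a + b) = chiq i a + chiq i b.
Proof. by rewrite /chiq -big_split; apply: eq_bigr => h _; rewrite ffunE rmorphD mulrDl. Qed.

Lemma chiq0 i : chiq i 0 = 0.
Proof. by rewrite /chiq big1 // => h _; rewrite ffunE rmorph0 mul0r. Qed.

Lemma chiq_sum i n (F : 'I_n -> QG gT) : chiq i (\sum_(j < n) F j) = \sum_(j < n) chiq i (F j).
Proof.
exact: (big_morph (chiq i) (chiqD i) (chiq0 i)).
Qed.

Lemma chiqX i a n : chiq i (gpow a n) = chiq i a ^+ n.
Proof. elim: n => [|n IH]; first by rewrite expr0 /gpow /= chiq1.
by rewrite exprS -IH /gpow /= chiqM. Qed.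

Definition intC := (intr : int -> algC).

Lemma int_integral (z : algC) : z \in Num.int -> integralOver intC z.
Proof.
rewrite intrEfloor => /eqP <-. exact: integral_id.
Qed.

Lemma chi_integral i h : integralOver intC ('chi[G]_i h).
Proof.
have h1 := lin_char_unity_root (chi_lin i) (in_setT h).
exists ('X^#[h]%g - 1); first by rewrite monicXnsubC // order_gt0.
by rewrite rmorphB /= map_polyXn rmorph1 /root !hornerE h1 subrr.
Qed.

Lemma chiq_ZG i a : ZG a -> integralOver intC (chiq i a).
Proof.
move=> Za; rewrite /chiq; apply: (big_ind (integralOver intC)).
- exact: integral0.
- exact: integral_add.
move=> h _; apply: integral_mul; last exact: chi_integral.
apply: int_integral; have := Za h; rewrite intrEfloor => /eqP <-.
by rewrite ratr_int rpred_int.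
Qed.

End Char.

Lemma integral_Aint (x : algC) : integralOver intC x -> x \in Aint.
Proof.
case=> p mp rp; apply: (root_monic_Aint rp); first exact: monic_map.
by apply/polyOverP => k; rewrite coef_map rpred_int.
Qed.

Section Bound.
Variable gT : finGroupType.
Hypothesis hab : abelian [set: gT].
Local Notation G := [set: gT].
Local Notation chiq := (@chiq gT).
Local Notation chiqM := (@chiqM gT hab).
Local Notation chiqX := (@chiqX gT hab).
Local Notation chi_lin := (@chi_lin gT hab).

Lemma chiq_intclos i s : intclos s -> integralOver intC (chiq i s).
Proof.
case=> n [c [Hc Heq]].
pose E k := \sum_(j < n | val j == k) chiq i (c j).
pose p := 'X^n + \poly_(k < n) E k.
have EE (k : 'I_n) : E k = chiq i (c k).
  by rewrite /E (big_pred1 k) // => j.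
apply: (integral_root_monic (p := p)).
- rewrite /p monicE lead_coefDl ?lead_coefXn // size_polyXn ltnS.
  exact: size_poly.
- rewrite /root /p hornerD hornerXn horner_poly.
  have := congr1 (chiq i) Heq.
  rewrite chiqD chiq_sum chiq0 chiqX => H.
  by apply/eqP; rewrite -[X in _ = X]H; congr (_ + _); apply: eq_bigr => j _; rewrite EE chiqM chiqX.
- apply/integral_poly => k; rewrite coefD coefXn coef_poly.
  apply: integral_add; first by case: eqP => _; [exact: integral1|exact: integral0].
  case: ifP => _; last exact: integral0.
  rewrite /E; apply: (big_ind (integralOver intC)).
  + exact: integral0.
  + exact: integral_add.
  by move=> j _; apply: chiq_ZG.
Qed.

Lemma intclos_bound (s : QG gT) : intclos s -> forall g, (#|gT|%:R * s g) \is a Num.int.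
Proof.
move=> Is g.
pose z := \sum_(i : Iirr G) chiq i s * 'chi_i (g^-1)%g.
have Hz : z = ratr (#|gT|%:R * s g).
  rewrite /z /chiq.
  under eq_bigr do rewrite big_distrl /=.
  rewrite exchange_big /= (bigD1 g) //= [X in _ + X]big1 ?addr0.
    under eq_bigr do rewrite -mulrA -lin_charM ?inE ?chi_lin // mulgV lin_char1 ?chi_lin // mulr1.
    by rewrite sumr_const card_Iirr_abelian // cardsT rmorphM /= rmorph_nat mulrC mulr_natr.
  move=> h hg.
  under eq_bigr do rewrite -mulrA -lin_charM ?inE ?chi_lin //.
  rewrite -big_distrr /=.
  have := second_orthogonality_relation (h * g^-1)%g (in_setT (1%g : gT)).
  rewrite class1G inE -eq_mulgV1 (negPf hg) mulr0n => H.
  suff -> : \sum_(i < Nirr G) 'chi_i (h * g^-1)%g = 0 by rewrite mulr0.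
  rewrite -[RHS]H; by apply: eq_bigr => i _; rewrite lin_char1 ?chi_lin // conjC1 mulr1.
have: z \in Aint.
  apply: integral_Aint; rewrite /z; apply: (big_ind (integralOver intC)).
  - exact: integral0.
  - exact: integral_add.
  by move=> i _; apply: integral_mul; [exact: chiq_intclos|exact: chi_integral].
rewrite Hz => /(Cint_rat_Aint (Crat_rat _)).
by rewrite Cint_rat.
Qed.
End Bound.
Lemma classical_min (P : nat -> Prop) n : P n -> exists k, P k /\ forall j, P j -> (k <= j)%N.
Proof.
elim: n {-2}n (leqnn n) => [|n IH] k hk Pk.
  exists k; split=> // j _; by move: hk; rewrite leqn0 => /eqP ->.
case: (classic (exists j, P j /\ (j < k)%N)) => [[j [Pj jk]]|H].
  by apply: (IH j) => //; rewrite -ltnS (leq_trans jk hk).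
exists k; split=> // j Pj; rewrite leqNgt; apply/negP => jk; apply: H; by exists j.
Qed.

Section Lattice.
Variable T : finType.
Variable L : (T -> rat) -> Prop.
Hypothesis LD : forall x y, L x -> L y -> L (fun t => x t + y t).
Hypothesis LZ : forall x (z : int), L x -> L (fun t => x t *~ z).
Hypothesis Le : forall t0, L (fun t => (t == t0)%:R).
Variable N : nat.
Hypothesis N0 : (0 < N)%N.
Hypothesis LB : forall x, L x -> forall t, (N%:R * x t) \is a Num.int.

Definition dot (w x : T -> rat) := \sum_t w t * x t.

Hypothesis L0 : L (fun _ => 0).

Definition Ls (s : seq T) x := L x /\ forall t, t \notin s -> x t = 0.

Lemma dotB w x b c : dot w (fun t => x t - b t * c) = dot w x - dot w b * c.
Proof.
rewrite /dot mulr_suml -sumrB; apply: eq_bigr => t _; by rewrite mulrBr mulrA.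
Qed.

Lemma latt_seq s : exists m (v w : nat -> T -> rat),
 (forall j, Ls s (v j)) /\
 (forall j x, Ls s x -> dot (w j) x \is a Num.int) /\
 (forall x, (forall t, t \notin s -> x t = 0) ->
    forall k, x k = \sum_(j < m) dot (w j) x * v j k).
Proof.
elim: s => [|t0 s [m [v [w [Hv [Hw Hr]]]]]].
  exists 0%N, (fun _ _ => 0), (fun _ _ => 0); split; [|split].
  - by move=> j; split.
  - by move=> j x _; rewrite /dot big1 // => t _; rewrite mul0r.
  - by move=> x Hx k; rewrite big_ord0 Hx.
pose P k := (0 < k)%N /\ exists x, Ls (t0 :: s) x /\ N%:R * x t0 = k%:R.
have PN : P N.
  split=> //; exists (fun t => (t == t0)%:R); split; last by rewrite eqxx mulr1.
  split=> // t; rewrite inE; by case: eqP.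
have [k [[k0 [b [Lb Hb]]] kmin]] := classical_min PN.
set beta := b t0.
have Nnz : (N%:R : rat) != 0 by rewrite pnatr_eq0 -lt0n.
have bpos : 0 < beta.
  have : 0 < N%:R * beta by rewrite Hb ltr0n.
  by rewrite pmulr_rgt0 // ltr0n.
have bnz : beta != 0 by rewrite gt_eqF.
have Ldiv x : Ls (t0 :: s) x -> (x t0 / beta) \is a Num.int.
  move=> [Lx Sx].
  set q := Num.floor (x t0 / beta).
  pose y := fun t => x t + b t *~ (- q).
  have Ly : Ls (t0 :: s) y.
    split; first exact: (LD Lx (LZ (- q) Lb.1)).
    by move=> t ht; rewrite /y Sx // Lb.2 // mul0rz addr0.
  have y0 : 0 <= y t0.
    rewrite /y mulrNz -mulrzr -/beta subr_ge0 mulrC -ler_pdivlMr //.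
    exact: floor_le.
  have y1 : y t0 < beta.
    rewrite /y mulrNz -mulrzr -/beta ltrBlDr -[X in _ < X + _]mulr1 -mulrDr.
    rewrite mulrC -ltr_pdivrMr // addrC.
    by have := floorD1_gt (x t0 / beta); rewrite -/q intrD.
  have yz : y t0 = 0.
    apply/eqP; rewrite eq_le y0 andbT leNgt; apply/negP => ypos.
    have : (N%:R * y t0) \is a Num.nat.
      by rewrite natrEint (LB Ly.1) mulr_ge0 // ltW.
    case/natrP => k' Hk'.
    have Pk' : P k'.
      split; last by exists y.
      by rewrite -(ltr0n rat) -Hk' mulr_gt0 // ltr0n.
    have := kmin _ Pk'; rewrite -(ler_nat rat) -Hk' -Hb ler_pM2l ?ltr0n //.
    by rewrite leNgt y1.
  move: yz; rewrite /y mulrNz -mulrzr -/beta => /eqP; rewrite subr_eq0 => /eqP ->.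
  by rewrite mulrC mulKf // rpred_int.
exists m.+1.
exists (fun j => if j is j'.+1 then v j' else b).
exists (fun j => if j is j'.+1 then (fun t => w j' t - dot (w j') b / beta * (t == t0)%:R)
                 else (fun t => beta^-1 * (t == t0)%:R)).
have dote c x : \sum_t c * (t == t0)%:R * x t = c * x t0.
  rewrite (bigD1 t0) //= eqxx mulr1 big1 => [|t /negPf ->]; first by rewrite addr0.
  by rewrite mulr0 mul0r.
have dot0 x : dot (fun t => beta^-1 * (t == t0)%:R) x = x t0 / beta.
  by rewrite /dot dote mulrC.
have dotS j x : dot (fun t => w j t - dot (w j) b / beta * (t == t0)%:R) x
               = dot (w j) (fun t => x t - b t * (x t0 / beta)).
  rewrite dotB /dot.
  under eq_bigr do rewrite mulrBl.
  rewrite sumrB dote; congr (_ - _); by rewrite mulrAC mulrA.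
split; [|split].
- case=> [|j] //; split; first exact: (Hv j).1.
  by move=> t; rewrite inE negb_or => /andP [_ ht]; apply: (Hv j).2.
- case=> [|j] x Lx; first by rewrite dot0 Ldiv.
  rewrite dotS.
  have := Ldiv _ Lx; rewrite intrEfloor => /eqP; set z := Num.floor _ => Hz.
  pose y := fun t => x t + b t *~ (- z).
  have Ly : Ls s y.
    split; first exact: (LD Lx.1 (LZ (- z) Lb.1)).
    move=> t ht; rewrite /y; case: (eqVneq t t0) => [->|tn].
      by rewrite mulrNz -mulrzr Hz -/beta mulrC divfK // subrr.
    by rewrite Lx.2 ?Lb.2 ?mul0rz ?addr0 // inE negb_or tn.
  have := Hw j _ Ly; congr (_ \is a _); apply: eq_bigr => t _.
  by rewrite /y mulrNz -mulrzr Hz.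
- move=> x Sx kk; rewrite big_ord_recl /= dot0.
  pose y := fun t => x t - b t * (x t0 / beta).
  have Sy : forall t, t \notin s -> y t = 0.
    move=> t ht; rewrite /y; case: (eqVneq t t0) => [->|tn].
      by rewrite -/beta mulrC divfK // subrr.
    by rewrite Sx ?Lb.2 ?mul0r ?subr0 // inE negb_or tn.
  have := Hr _ Sy kk; rewrite /y => H.
  rewrite [RHS]addrC -(subrK (b kk * (x t0 / beta)) (x kk)) H [X in _ = _ + X]mulrC.
  congr (_ + _); by apply: eq_bigr => j _; rewrite add0n dotS.
Qed.

Lemma latt : exists m (v w : nat -> T -> rat), (forall j, L (v j)) /\
  (forall j x, L x -> dot (w j) x \is a Num.int) /\
  (forall k l, (k == l)%:R = \sum_(j < m) w j l * v j k).
Proof.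
have [m [v [w [Hv [Hw Hr]]]]] := latt_seq (enum T).
exists m, v, w; split; [|split].
- by move=> j; exact: (Hv j).1.
- by move=> j x Lx; apply: Hw; split=> // t; rewrite mem_enum.
- move=> k l; rewrite (Hr (fun t => (t == l)%:R)) => [|t]; last by rewrite mem_enum.
  apply: eq_bigr => j _; congr (_ * _).
  rewrite /dot (bigD1 l) //= eqxx mulr1 big1 ?addr0 // => t /negPf ->.
  by rewrite mulr0.
Qed.
End Lattice.

Section Alg.
Variable gT : finGroupType.
Implicit Types a b : QG gT.

Lemma ZG_sumz n (F : 'I_n -> QG gT) (c : 'I_n -> int) :
  (forall i, ZG (F i)) -> ZG (\sum_(i < n) F i *~ c i).
Proof.
move=> HF g; rewrite sum_ffunE; apply: rpred_sum => i _.
by rewrite ffunMzE rpredMz ?HF.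
Qed.

Lemma gmul_sumlz n (F : 'I_n -> QG gT) (c : 'I_n -> int) y :
  gmul (\sum_(i < n) F i *~ c i) y = \sum_(i < n) gmul (F i) y *~ c i.
Proof.
apply/ffunP => g; rewrite sum_ffunE gmulE.
under eq_bigr do rewrite sum_ffunE big_distrl /=.
rewrite exchange_big /=; apply: eq_bigr => i _.
rewrite ffunMzE gmulE mulrz_suml; apply: eq_bigr => h _.
by rewrite ffunMzE mulrzAl.
Qed.

Lemma gmul_sumrz n (F : 'I_n -> QG gT) (c : 'I_n -> int) y :
  gmul y (\sum_(i < n) F i *~ c i) = \sum_(i < n) gmul y (F i) *~ c i.
Proof.
apply/ffunP => g; rewrite sum_ffunE gmulE.
under eq_bigr do rewrite sum_ffunE big_distrr /=.
rewrite exchange_big /=; apply: eq_bigr => i _.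
rewrite ffunMzE gmulE mulrz_suml; apply: eq_bigr => h _.
by rewrite ffunMzE mulrzAr.
Qed.

Lemma gmulZ a b : ZG a -> ZG b -> ZG (gmul a b).
Proof. by move=> Za Zb g; rewrite gmulE rpred_sum // => h _; rewrite rpredM. Qed.

End Alg.

Section Tens.
Variables gT1 gT2 : finGroupType.

Lemma tensE (a : QG gT1) (b : QG gT2) g h : tens a b (g, h) = a g * b h.
Proof. by rewrite ffunE. Qed.

Lemma gmul_pair (x y : QG (gT1 * gT2)%type) g h :
  gmul x y (g, h) = \sum_k \sum_l x (k, l) * y ((k^-1 * g)%g, (l^-1 * h)%g).
Proof. by rewrite gmulE pair_bigA; apply: eq_bigr => -[k l] _. Qed.

Lemma gmul_tens (a a' : QG gT1) (b b' : QG gT2) :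
  gmul (tens a b) (tens a' b') = tens (gmul a a') (gmul b b').
Proof.
apply/ffunP => -[g h]; rewrite gmul_pair tensE !gmulE big_distrl /=.
apply: eq_bigr => k _; rewrite big_distrr /=; apply: eq_bigr => l _.
by rewrite !tensE mulrACA.
Qed.

Lemma ZG_tens (a : QG gT1) (b : QG gT2) : ZG a -> ZG b -> ZG (tens a b).
Proof. by move=> Za Zb [g h]; rewrite tensE rpredM. Qed.

End Tens.

Inductive span (T : finType) (Gen : (T -> rat) -> Prop) : (T -> rat) -> Prop :=
| sp0 : span Gen (fun _ => 0)
| spG u : Gen u -> span Gen u
| spD x y : span Gen x -> span Gen y -> span Gen (fun t => x t + y t)
| spZ x (z : int) : span Gen x -> span Gen (fun t => x t *~ z)
| spE x y : span Gen x -> (forall t, x t = y t) -> span Gen y.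

Lemma span_dot (T : finType) (Gen : (T -> rat) -> Prop) al :
  (forall u, Gen u -> dot al u \is a Num.int) ->
  forall x, span Gen x -> dot al x \is a Num.int.
Proof.
move=> HG x; elim=> {x} [|u Gu|x y _ Hx _ Hy|x z _ Hx|x y _ Hx Hxy].
- by rewrite /dot big1 // => t _; rewrite mulr0.
- exact: HG.
- by rewrite /dot; under eq_bigr do rewrite mulrDr; rewrite big_split rpredD.
- rewrite /dot; under eq_bigr do rewrite mulrzAr; by rewrite -mulrz_suml rpredMz.
- by rewrite /dot; under eq_bigr do rewrite -Hxy.
Qed.

Lemma span_bound (T : finType) (Gen : (T -> rat) -> Prop) (N : nat) :
  (forall u, Gen u -> forall t, N%:R * u t \is a Num.int) ->
  forall x, span Gen x -> forall t, N%:R * x t \is a Num.int.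
Proof.
move=> HG x; elim=> {x} [|u Gu|x y _ Hx _ Hy|x z _ Hx|x y _ Hx Hxy] t.
- by rewrite mulr0.
- exact: HG.
- by rewrite mulrDr rpredD.
- by rewrite mulrzAr rpredMz.
- by rewrite -Hxy.
Qed.

Lemma cond_crit (gT : finGroupType) (c : QG gT) :
  (forall t g, intclos t -> gmul c t g \is a Num.int) -> condG c.
Proof.
move=> H; split; last by move=> t It g; apply: H.
apply: ZG_intclos => g; rewrite -(gmul1r c); apply: H.
exact: ZG_intclos (@ZG_gone gT).
Qed.

Definition delta (gT : finGroupType) (g : gT) : QG gT := [ffun k => (k == g)%:R].

Lemma ZG_delta (gT : finGroupType) (g : gT) : ZG (delta g).
Proof. by move=> k; rewrite ffunE; case: eqP. Qed.

Lemma tspan_ZG (gT1 gT2 : finGroupType) (y : QG (gT1 * gT2)%type) :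
  tensor_span (@ZG gT1) (@ZG gT2) y -> ZG y.
Proof.
case=> n [c [a [b [Hab ->]]]]; apply: ZG_sumz => i.
by apply: ZG_tens; [exact: (Hab i).1|exact: (Hab i).2].
Qed.

Lemma ZG_tspan (gT1 gT2 : finGroupType) (y : QG (gT1 * gT2)%type) :
  ZG y -> tensor_span (@ZG gT1) (@ZG gT2) y.
Proof.
move=> Zy.
pose F (p : (gT1 * gT2)%type) : QG (gT1 * gT2)%type :=
  tens (delta p.1) (delta p.2) *~ Num.floor (y p).
exists #|(predT : pred (gT1 * gT2)%type)|, (fun i => Num.floor (y (enum_val i))),
  (fun i => delta (enum_val i).1), (fun i => delta (enum_val i).2).
split; first by move=> i; split; apply: ZG_delta.
have -> : \sum_(i < #|(predT : pred (gT1 * gT2)%type)|)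
    tens (delta (enum_val i).1) (delta (enum_val i).2) *~ Num.floor (y (enum_val i))
  = \sum_(i < #|(predT : pred (gT1 * gT2)%type)|) F (enum_val i) by [].
rewrite -(big_enum_val F); apply/ffunP => -[g h]; rewrite sum_ffunE (bigD1 (g, h)) //=.
rewrite big1 ?addr0 => [|p hp].
  rewrite ffunMzE tensE !ffunE !eqxx mulr1.
  by have := Zy (g, h); rewrite intrEfloor => /eqP {1}<-.
rewrite ffunMzE tensE !ffunE.
case: (eqVneq p.1 g) => [e1|n1]; last by rewrite mul0r mul0rz.
case: (eqVneq p.2 h) => [e2|n2]; last by rewrite mulr0 mul0rz.
by move: hp; case: p e1 e2 => /= ? ? -> ->; rewrite eqxx.
Qed.

Unset Implicit Arguments.
Set Strict Implicit.

Theorem mainTheorem12 (p q e f : nat) (gT1 gT2 : finGroupType)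
  (hp : prime p) (hq : prime q) (hpq : p != q)
  (hab1 : abelian [set: gT1]) (hab2 : abelian [set: gT2])
  (hc1 : #|gT1| = (p ^ e)%N) (hc2 : #|gT2| = (q ^ f)%N) :
  forall x : QG (gT1 * gT2)%type,
    conductor (tensor_span (@intclos gT1) (@intclos gT2))
              (tensor_span (@ZG gT1) (@ZG gT2)) x
    <-> tensor_span (@condG gT1) (@condG gT2) x.
Proof.
move=> x; split; last first.
  case=> n [c [a [b [Hab ->]]]]; split.
    exists n, c, a, b; split=> // i; split; [exact: (Hab i).1.1|exact: (Hab i).2.1].
  move=> t [n' [c' [a' [b' [Hab' ->]]]]].
  apply: ZG_tspan; rewrite gmul_sumlz; apply: ZG_sumz => i; rewrite gmul_sumrz; apply: ZG_sumz => j.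
  rewrite gmul_tens; apply: ZG_tens; first exact: (Hab i).1.2 _ (Hab' j).1.
  exact: (Hab i).2.2 _ (Hab' j).2.
case=> _ Hmul.
have Hab : forall (a : QG gT1) (b : QG gT2), intclos a -> intclos b ->
    ZG (gmul x (tens a b)).
  move=> a b Ia Ib; apply: tspan_ZG; apply: Hmul.
  exists 1%N, (fun _ => 1), (fun _ => a), (fun _ => b); split => //.
  by rewrite big_ord1 mulr1z.
pose Gen2 := fun u : gT2 -> rat =>
  exists (b : QG gT2) (h : gT2), intclos b /\ u = (fun l => b (l^-1 * h)%g).
have Le : forall t0 : gT2, span Gen2 (fun t => (t == t0)%:R).
  move=> t0; apply: (@spE _ _ (fun l => gone gT2 (l^-1 * t0)%g)).
    by apply: spG; exists (gone gT2), t0; split=> //; apply: ZG_intclos; apply: ZG_gone.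
  by move=> l; rewrite goneE -eq_invg_mul invgK.
have LB : forall y, span Gen2 y -> forall t, #|gT2|%:R * y t \is a Num.int.
  apply: span_bound => u [b [h [Ib ->]]] l.
  exact: (intclos_bound hab2 Ib).
have N0 : (0 < #|gT2|)%N by apply/card_gt0P; exists 1%g.
have [m [v [w [Hv [Hw Hr]]]]] :=
  latt (@spD _ Gen2) (@spZ _ Gen2) Le N0 LB (@sp0 _ Gen2).
pose a j : QG gT1 := [ffun g => \sum_l x (g, l) * v j l].
pose bb j : QG gT2 := [ffun h => w j h].
exists m, (fun _ => 1), (fun j => a j), (fun j => bb j); split.
  move=> j; split.
    apply: cond_crit => t g It; rewrite gmulE.
    pose al := fun l => \sum_k x (k, l) * t (k^-1 * g)%g.
    have -> : \sum_h a j h * t (h^-1 * g)%g = dot al (v j).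
      rewrite /dot /al; under eq_bigr do rewrite ffunE big_distrl /=.
      rewrite exchange_big /=; apply: eq_bigr => l _; rewrite big_distrl /=.
      by apply: eq_bigr => k _; rewrite mulrAC.
    apply: span_dot (Hv j) => u [b [h [Ib ->]]].
    have := Hab _ _ It Ib (g, h); rewrite gmul_pair.
    rewrite /dot /al exchange_big /=; congr (_ \is a _); apply: eq_bigr => l _.
    rewrite big_distrl /=; apply: eq_bigr => k _; by rewrite tensE mulrA.
  apply: cond_crit => t h It; rewrite gmulE.
  have -> : \sum_l bb j l * t (l^-1 * h)%g = dot (w j) (fun l => t (l^-1 * h)%g).
    by apply: eq_bigr => l _; rewrite ffunE.
  by apply: Hw; apply: spG; exists t, h.
apply/ffunP => -[g h]; rewrite sum_ffunE.
transitivity (\sum_l x (g, l) * (l == h)%:R).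
  rewrite (bigD1 h) //= eqxx mulr1 big1 ?addr0 // => l /negPf ->; by rewrite mulr0.
under [RHS]eq_bigr do rewrite ffunMzE mulr1z tensE !ffunE big_distrl /=.
rewrite exchange_big /=; apply: eq_bigr => l _; rewrite Hr big_distrr /=.
by apply: eq_bigr => j _; rewrite mulrA mulrAC.
Qed.
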